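(* Let $k$ be a constant and let $D$ be the derivation (linear, satisfying the Leibniz rule, killing constants) on polynomials in the commuting variables $I,x,y,u$ determined by $D(I)=I(y+u)$, $D(x)=2kxy$, $D(y)=2kxy$, $D(u)=2kxy$. Then for $n\ge1$, $$D^n(I)=I\sum_{w\in B_n}x^{\mathrm{exc}(w)}y^{\mathrm{aexc}(w)}u^{\mathrm{fix}(w)}k^{n-\mathrm{cyc}(w)}.$$
   Context: $B_n$ is the hyperoctahedral group of signed permutations $w$ of $\pm[n]$ with $w(-i)=-w(i)$, written in standard cycle decomposition (each cycle starts with its element of largest absolute value, cycles ordered by increasing absolute value of first elements); $\mathrm{cyc}(w)$ is the number of cycles. For $i\in[n]$: $i$ is an excedance if $w(|w(i)|)>w(i)$; an anti-excedance if $w(i)=-i$ or $w(|w(i)|)<w(i)$; a fixed point if $w(i)=i$. $\mathrm{exc}(w)$, $\mathrm{aexc}(w)$, $\mathrm{fix}(w)$ denote their numbers. *)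

(* Defs.v *)
From HB Require Import structures.
From mathcomp Require Import all_boot all_order all_algebra all_fingroup.
From mathcomp Require Import mpoly.
Set Implicit Arguments. Unset Strict Implicit. Unset Printing Implicit Defensive.
Import GRing.Theory.
Local Open Scope ring_scope.

(* ---------- Signed permutations (hyperoctahedral group B_n) ----------
   A signed permutation w of ±[n] (w(-i) = -w(i)) is determined by its
   values on [n] = {1,...,n}; we encode it as a pair (s, e) where
   s : {perm 'I_n} is the underlying permutation |w| and e i = true iff
   w(i) is negative.  Element i : 'I_n stands for i+1 ∈ [n], so
   w(i+1) = (-1)^(e i) * (s i + 1). *)
Definition Bn (n : nat) : finType := ({perm 'I_n} * {ffun 'I_n -> bool})%type.

Definition sval n (w : Bn n) (i : 'I_n) : int :=
  if w.2 i then - ((w.1 i).+1)%:Z else ((w.1 i).+1)%:Z.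

Definition absw n (w : Bn n) (i : 'I_n) : 'I_n := w.1 i.

Definition is_exc n (w : Bn n) (i : 'I_n) : bool :=
  (sval w i < sval w (absw w i))%R.
Definition is_aexc n (w : Bn n) (i : 'I_n) : bool :=
  (sval w i == - (i.+1)%:Z) || (sval w (absw w i) < sval w i)%R.
Definition is_fix n (w : Bn n) (i : 'I_n) : bool :=
  sval w i == (i.+1)%:Z.

Definition exc n (w : Bn n) : nat := #|[pred i | is_exc w i]|.
Definition aexc n (w : Bn n) : nat := #|[pred i | is_aexc w i]|.
Definition fixB n (w : Bn n) : nat := #|[pred i | is_fix w i]|.
(* number of cycles in the standard cycle decomposition of w: each cycle of
   a signed permutation in that notation is a cycle of |w| on [n]
   (decorated with signs), so cyc(w) = number of cycles of |w|. *)
Definition cyc n (w : Bn n) : nat := #|porbits w.1|.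

Definition vI (R : comNzRingType) : {mpoly R[4]} := 'X_(inord 0).
Definition vx (R : comNzRingType) : {mpoly R[4]} := 'X_(inord 1).
Definition vy (R : comNzRingType) : {mpoly R[4]} := 'X_(inord 2).
Definition vu (R : comNzRingType) : {mpoly R[4]} := 'X_(inord 3).

Definition Dgen (R : comNzRingType) (k : R) (i : 'I_4) : {mpoly R[4]} :=
  match val i with
  | 0 => vI R * (vy R + vu R)
  | _ => k%:MP *+ 2 * vx R * vy R
  end.

(* the unique derivation (linear, Leibniz, killing constants) with the
   prescribed values on the generators: D p = sum_i D(v_i) * dp/dv_i *)
Definition Dder (R : comNzRingType) (k : R) (p : {mpoly R[4]}) : {mpoly R[4]} :=
  \sum_(i < 4) Dgen k i * mderiv i p.

(* Main.v *)
From Pilot Require Import Defs.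
From HB Require Import structures.
From mathcomp Require Import all_boot all_order all_algebra all_fingroup.
From mathcomp Require Import mpoly.
From mathcomp Require Import ring zify.
Set Implicit Arguments. Unset Strict Implicit. Unset Printing Implicit Defensive.
Import GRing.Theory Order.TTheory Num.Theory.
Local Open Scope ring_scope.

Section Der.
Variables (R : comNzRingType) (k : R).
Local Notation D := (Dder k).
Local Notation MP := {mpoly R[4]}.

Lemma D0 : D 0 = 0.
Proof. by rewrite /Dder big1 // => i _; rewrite mderiv0 mulr0. Qed.

Lemma DD p q : D (p + q) = D p + D q.
Proof. by rewrite /Dder -big_split; apply: eq_bigr => i _; rewrite mderivD mulrDr. Qed.

Lemma DM p q : D (p * q) = D p * q + p * D q.
Proof.
rewrite /Dder mulr_suml mulr_sumr -big_split; apply: eq_bigr => i _.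
by rewrite mderivM /=; ring.
Qed.

Lemma DC c : D c%:MP = 0.
Proof. by rewrite /Dder big1 // => i _; rewrite mderivC mulr0. Qed.

Lemma Dsum (I : finType) (F : I -> MP) : D (\sum_i F i) = \sum_i D (F i).
Proof. exact: (big_morph D DD D0). Qed.

Lemma mderivXX (i j : 'I_4) : mderiv i ('X_j : MP) = (i == j)%:R.
Proof.
rewrite mderivX mnm1E eq_sym; case: eqP => [->|_]; last by rewrite scale0r.
have -> : (U_(j) - U_(j))%MM = 0%MM by apply/mnmP => l; rewrite mnmBE subnn mnm0E.
by rewrite mpolyX0 scale1r.
Qed.

Definition gg : MP := k%:MP *+ 2 * vx R * vy R.

Lemma eq_inord4 (i : 'I_4) j : (j < 4)%N -> (i == inord j) = (val i == j).
Proof. by move=> hj; rewrite -(inj_eq val_inj) /= inordK. Qed.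

Lemma val_inord4 j : (j < 4)%N -> \val (inord j : 'I_4) = j.
Proof. exact: inordK. Qed.

Lemma Dvar j : (j < 4)%N -> D 'X_(inord j) = Dgen k (inord j).
Proof.
move=> hj; rewrite /Dder (bigD1 (inord j)) //= mderivXX eqxx mulr1 big1 ?addr0 //.
by move=> i /negbTE ne; rewrite mderivXX ne mulr0.
Qed.

Lemma DvI : D (vI R) = vI R * (vy R + vu R).
Proof. by rewrite /vI Dvar // /Dgen val_inord4. Qed.
Lemma Dvx : D (vx R) = gg.
Proof. by rewrite /vx Dvar // /Dgen val_inord4. Qed.
Lemma Dvy : D (vy R) = gg.
Proof. by rewrite /vy Dvar // /Dgen val_inord4. Qed.
Lemma Dvu : D (vu R) = gg.
Proof. by rewrite /vu Dvar // /Dgen val_inord4. Qed.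
Lemma Dprod m (f : 'I_m -> MP) : (forall j, D (f j) = gg) ->
  D (\prod_j f j) = \sum_j gg * \prod_(l | l != j) f l.
Proof.
elim: m f => [|m IH] f Hf.
  by rewrite !big_ord0 -[1]/(1%:MP) DC.
rewrite big_ord_recr DM IH; last by move=> j; exact: Hf.
rewrite Hf [RHS]big_ord_recr /= mulr_suml; congr (_ + _).
  apply: eq_bigr => j _; rewrite -mulrA; congr (_ * _).
  rewrite [RHS]big_mkcond big_ord_recr /= [in RHS]big_mkcond /=.
  have -> : (ord_max != widen_ord (leqnSn m) j) by rewrite -(inj_eq val_inj) /= neq_ltn ltn_ord orbT.
  congr (_ * _); rewrite big_mkcond; apply: eq_bigr => l _.
  by rewrite -[widen_ord _ l == _](inj_eq val_inj) /= -[l == j](inj_eq val_inj).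
rewrite mulrC; congr (_ * _).
rewrite [RHS]big_mkcond big_ord_recr /= eqxx mulr1; apply: eq_bigr => l _.
by have -> : (widen_ord (leqnSn m) l != ord_max) by rewrite -(inj_eq val_inj) /= neq_ltn ltn_ord.
Qed.
End Der.
Local Notation svalB := Pilot.Defs.sval.
Section Stat.
Variable R : comNzRingType.
Local Notation MP := {mpoly R[4]}.

Definition Tw (a b : int) : MP :=
  if a < b then vx R else if b < a then vy R else if a < 0 then vy R else vu R.
Definition tt n (w : Bn n) j := Tw (svalB w j) (svalB w (absw w j)).
Definition mono n (w : Bn n) : MP := vx R ^+ exc w * vy R ^+ aexc w * vu R ^+ fixB w.

Lemma sval_inj n (w : Bn n) i j : svalB w i = svalB w j -> i = j.
Proof.
move=> h; apply: (@perm_inj _ w.1); apply: val_inj; move: h.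
rewrite /svalB; case: (w.2 i); case: (w.2 j) => /=. all: lia.
Qed.

Lemma sval_bound n (w : Bn n) j : (- (n.+1)%:Z < svalB w j < (n.+1)%:Z).
Proof. by rewrite /svalB; have := ltn_ord (w.1 j); case: (w.2 j); lia. Qed.

Lemma sval_fix n (w : Bn n) j : absw w j = j -> svalB w j = if w.2 j then - (j.+1)%:Z else (j.+1)%:Z.
Proof. by rewrite /svalB /absw => ->. Qed.

Lemma sval_eqfix n (w : Bn n) j : (svalB w j == (j.+1)%:Z) || (svalB w j == - (j.+1)%:Z) -> absw w j = j.
Proof. by rewrite /svalB /absw => h; apply: val_inj; move: h; case: (w.2 j) => /=; lia. Qed.

Lemma tt_E n (w : Bn n) j :
  tt w j = vx R ^+ is_exc w j * vy R ^+ is_aexc w j * vu R ^+ is_fix w j.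
Proof.
rewrite /tt /Tw /is_exc /is_aexc /is_fix.
case: (eqVneq (absw w j) j) => hj.
  rewrite hj ltxx sval_fix //; case: (w.2 j) => /=.
    by rewrite eqxx /= expr0 expr1 mul1r mulr1.
  by rewrite eqxx expr0 expr1 !mul1r.
have ne : svalB w j != svalB w (absw w j).
  by apply: contra hj => /eqP /sval_inj <-.
have h1 : (svalB w j == (j.+1)%:Z) = false.
  by apply/negbTE; apply: contra hj => h; apply/eqP; apply: sval_eqfix; rewrite h.
have h2 : (svalB w j == - (j.+1)%:Z) = false.
  by apply/negbTE; apply: contra hj => h; apply/eqP; apply: sval_eqfix; rewrite h orbT.
rewrite h1 h2 /=; case: ltgtP ne => //= _ _; rewrite ?expr0 ?expr1; ring.
Qed.

Lemma mono_prod n (w : Bn n) : mono w = \prod_j tt w j.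
Proof.
rewrite (eq_bigr _ (fun j _ => tt_E w j)) !big_split /= !prodrXr /mono.
have C : forall P : pred 'I_n, \sum_j (P j : nat) = #|[pred j | P j]|.
  move=> P; rewrite -sum1_card [RHS]big_mkcond /=; apply: eq_bigr => j _; rewrite inE; by case: (P j).
by rewrite /exc /aexc /fixB !C.
Qed.

Definition extb n (e : {ffun 'I_n -> bool}) (j : 'I_n.+1) : bool :=
  if unlift ord_max j is Some j' then e j' else false.

Definition Lp n (s : {perm 'I_n}) : {perm 'I_n.+1} := lift_perm ord_max ord_max s.

Definition ins n (w : Bn n) (i : 'I_n.+1) (b : bool) : Bn n.+1 :=
  ((tperm i ord_max * Lp w.1)%g,
   [ffun j => if j == i then b else if j == ord_max then extb w.2 i else extb w.2 j]).

Lemma extb_lift n (e : {ffun 'I_n -> bool}) j : extb e (lift ord_max j) = e j.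
Proof. by rewrite /extb liftK. Qed.

Lemma val_lift_max n (j : 'I_n) : val (lift ord_max j) = val j.
Proof. by rewrite /= /bump leqNgt ltn_ord. Qed.

Lemma widen_lift n (j : 'I_n) : widen_ord (leqnSn n) j = lift ord_max j.
Proof. by apply: val_inj; rewrite val_lift_max. Qed.

Lemma lift_neq_max n (j : 'I_n) : (lift ord_max j != ord_max).
Proof. by rewrite eq_sym neq_lift. Qed.

Section Ins.
Variables (n : nat) (w : Bn n) (b : bool).

Lemma ins_s_lift i j : lift ord_max j != i -> (ins w i b).1 (lift ord_max j) = lift ord_max (w.1 j).
Proof.
move=> h; rewrite /= permM tpermD; [by rewrite lift_perm_lift | by rewrite eq_sym | ].
apply/eqP => /(congr1 val); rewrite /= /bump; have := ltn_ord j; rewrite /=; lia.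
Qed.

Lemma ins_s_i i : (ins w i b).1 i = ord_max.
Proof. by rewrite /= permM tpermL lift_perm_id. Qed.

Lemma ins_s_max i0 : (ins w (lift ord_max i0) b).1 ord_max = lift ord_max (w.1 i0).
Proof. by rewrite /= permM tpermR lift_perm_lift. Qed.

Lemma ins_e_lift i j : lift ord_max j != i -> (ins w i b).2 (lift ord_max j) = w.2 j.
Proof. by move=> h; rewrite /= ffunE (negbTE h) (negbTE (lift_neq_max j)) extb_lift. Qed.

Lemma ins_e_i i : (ins w i b).2 i = b.
Proof. by rewrite /= ffunE eqxx. Qed.

Lemma ins_e_max i0 : (ins w (lift ord_max i0) b).2 ord_max = w.2 i0.
Proof. by rewrite /= ffunE eq_sym (negbTE (lift_neq_max i0)) eqxx extb_lift. Qed.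

Lemma sv_lift i j : lift ord_max j != i -> svalB (ins w i b) (lift ord_max j) = svalB w j.
Proof.
by move=> h; rewrite /Defs.sval ins_s_lift // ins_e_lift // val_lift_max.
Qed.

Lemma sv_i i : svalB (ins w i b) i = if b then - (n.+1)%:Z else (n.+1)%:Z.
Proof. by rewrite /Defs.sval ins_s_i ins_e_i. Qed.

Lemma sv_max i0 : svalB (ins w (lift ord_max i0) b) ord_max = svalB w i0.
Proof. by rewrite /Defs.sval ins_s_max ins_e_max val_lift_max. Qed.

Definition Xb : MP := if b then vy R else vx R.
Definition Yb : MP := if b then vx R else vy R.

Lemma Tw_a_big a : - (n.+1)%:Z < a < (n.+1)%:Z ->
  Tw a (if b then - (n.+1)%:Z else (n.+1)%:Z) = Xb.
Proof.
move=> h; rewrite /Tw /Xb; case: b.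
  have -> : (a < - (n.+1)%:Z) = false by lia.
  by have -> : (- (n.+1)%:Z < a) by lia.
by have -> : (a < (n.+1)%:Z) by lia.
Qed.

Lemma Tw_big_a a : - (n.+1)%:Z < a < (n.+1)%:Z ->
  Tw (if b then - (n.+1)%:Z else (n.+1)%:Z) a = Yb.
Proof.
move=> h; rewrite /Tw /Yb; case: b.
  by have -> : (- (n.+1)%:Z < a) by lia.
have -> : ((n.+1)%:Z < a) = false by lia.
by have -> : (a < (n.+1)%:Z) by lia.
Qed.

Lemma tt_lift i j : lift ord_max j != i ->
  tt (ins w i b) (lift ord_max j) = if lift ord_max (w.1 j) == i then Xb else tt w j.
Proof.
move=> h; rewrite /tt /absw ins_s_lift // sv_lift //.
case: eqP => [E|/eqP ne]; first by rewrite E sv_i Tw_a_big // sval_bound.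
by rewrite sv_lift.
Qed.

Lemma tt_i i0 : tt (ins w (lift ord_max i0) b) (lift ord_max i0) = Yb.
Proof. by rewrite /tt /absw ins_s_i sv_i sv_max Tw_big_a // sval_bound. Qed.

Lemma tt_max i0 : tt (ins w (lift ord_max i0) b) ord_max =
  if w.1 i0 == i0 then Xb else tt w i0.
Proof.
rewrite /tt /absw ins_s_max sv_max.
case: (eqVneq (w.1 i0) i0) => [E|ne]; first by rewrite E sv_i Tw_a_big // sval_bound.
by rewrite sv_lift // (inj_eq (@lift_inj _ ord_max)).
Qed.

Lemma tt_maxmax : tt (ins w ord_max b) ord_max = if b then vy R else vu R.
Proof.
rewrite /tt /absw ins_s_i sv_i /Tw ltxx; case: b => //;
  by have -> : (- (n.+1)%:Z < 0) by lia.
Qed.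

End Ins.

Lemma prod_ins_max n (w : Bn n) b :
  \prod_j tt (ins w ord_max b) j = (if b then vy R else vu R) * \prod_j tt w j.
Proof.
rewrite big_ord_recr /= tt_maxmax mulrC; congr (_ * _); apply: eq_bigr => j _.
by rewrite widen_lift tt_lift ?lift_neq_max // (negbTE (lift_neq_max _)).
Qed.

Lemma prod_ins n (w : Bn n) b (i0 : 'I_n) :
  \prod_j tt (ins w (lift ord_max i0) b) j =
  vx R * vy R * \prod_(j | j != (w.1^-1)%g i0) tt w j.
Proof.
rewrite big_ord_recr /= tt_max.
rewrite (eq_bigr (fun j => tt (ins w (lift ord_max i0) b) (lift ord_max j))); last first.
  by move=> j _; rewrite widen_lift.
rewrite (bigD1 i0) //= tt_i.
have L : forall j, j != i0 -> tt (ins w (lift ord_max i0) b) (lift ord_max j) =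
    if w.1 j == i0 then Xb b else tt w j.
  by move=> j ne; rewrite tt_lift ?(inj_eq (@lift_inj _ ord_max)).
case: (eqVneq (w.1 i0) i0) => E.
  have E' : (w.1^-1)%g i0 = i0 by rewrite -{1}E permK.
  rewrite E' (eq_bigr (fun j => tt w j)); last first.
    move=> j ne; rewrite L //; case: eqP => // E2.
    by move: ne; rewrite -E in E2; rewrite (perm_inj E2) eqxx.
  by clear L; rewrite /Xb /Yb; case: b; ring.
set j0 := (w.1^-1)%g i0.
have ne0 : j0 != i0.
  by apply/eqP => E2; move: E; rewrite -{1}E2 /j0 permKV eqxx.
rewrite (bigD1 j0) //= L // /j0 permKV eqxx -/j0.
rewrite (eq_bigr (fun j => tt w j)); last first.
  move=> j /andP [ne1 ne2]; rewrite L //; case: eqP => // E2.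
  by move: ne2; rewrite /j0 -E2 permK eqxx.
rewrite [in RHS](bigD1 i0) 1?eq_sym //=.
rewrite (eq_bigl (fun j => (j != j0) && (j != i0))); last by move=> j; rewrite andbC.
by clear L; rewrite /Xb /Yb; case: b; ring.
Qed.

Definition liftS n (O : {set 'I_n}) : {set 'I_n.+1} := lift ord_max @: O.

Section Cyc.
Variables (n : nat) (s : {perm 'I_n}).

Lemma Lpow_max m : ((Lp s) ^+ m)%g ord_max = ord_max.
Proof. by elim: m => [|m IH]; rewrite ?expg0 ?perm1 // expgSr permM IH lift_perm_id. Qed.

Lemma Lpow_lift m j : ((Lp s) ^+ m)%g (lift ord_max j) = lift ord_max ((s ^+ m)%g j).
Proof.
elim: m => [|m IH]; first by rewrite !expg0 !perm1.
by rewrite !expgSr !permM IH lift_perm_lift.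
Qed.

Lemma porbit_Lmax : porbit (Lp s) ord_max = [set ord_max].
Proof.
apply/setP => x; rewrite inE; apply/porbitP/eqP => [[m ->]|->]; first exact: Lpow_max.
by exists 0%N; rewrite expg0 perm1.
Qed.

Lemma porbit_Llift j : porbit (Lp s) (lift ord_max j) = lift ord_max @: porbit s j.
Proof.
apply/setP => x; apply/porbitP/imsetP => [[m ->]|[y /porbitP [m ->] ->]].
  by exists ((s ^+ m)%g j); [exact: mem_porbit | exact: Lpow_lift].
by exists m; rewrite Lpow_lift.
Qed.

Lemma porbits_L : porbits (Lp s) =
  [set ord_max] |: (@liftS n @: porbits s).
Proof.
apply/setP => O; rewrite !inE; apply/imsetP/orP.
  case=> x _ ->; case: (unliftP ord_max x) => [j ->|->].
    by right; apply/imsetP; exists (porbit s j); [exact: imset_f | exact: porbit_Llift].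
  by left; rewrite porbit_Lmax.
case=> [/eqP ->|/imsetP [O' /imsetP [j _ ->] ->]].
  by exists ord_max => //; rewrite porbit_Lmax.
by exists (lift ord_max j) => //; rewrite porbit_Llift.
Qed.

Lemma card_porbits_L : #|porbits (Lp s)| = (#|porbits s|).+1.
Proof.
rewrite porbits_L cardsU1 card_imset; last by move=> A B; apply: imset_inj; exact: lift_inj.
suff -> : [set ord_max] \notin (@liftS n @: porbits s) by [].
apply/imsetP => [[O _ E]].
have : ord_max \in [set (ord_max : 'I_n.+1)] by rewrite inE.
rewrite E => /imsetP [y _ /eqP]; apply/negP.
exact: neq_lift.
Qed.

End Cyc.

Lemma cyc_le n (w : Bn n) : (cyc w <= n)%N.
Proof. by rewrite /cyc /porbits; apply: leq_trans (leq_imset_card _ _) _; rewrite card_ord. Qed.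

Lemma cyc_ins_max n (w : Bn n) b : cyc (ins w ord_max b) = (cyc w).+1.
Proof. by rewrite /cyc /= tperm1 mul1g card_porbits_L. Qed.

Lemma cyc_ins n (w : Bn n) b (i0 : 'I_n) : cyc (ins w (lift ord_max i0) b) = cyc w.
Proof.
rewrite /cyc /=.
have := porbits_mul_tperm (Lp w.1) (lift ord_max i0) ord_max.
rewrite /= porbit_Lmax card_porbits_L inE (negbTE (lift_neq_max i0)).
rewrite /= addn1 (_ : 1.*2 = 2)%N // addn2 => h. by case: h.
Qed.

Definition insP n (x : (Bn n * 'I_n.+1 * bool)%type) : Bn n.+1 := ins x.1.1 x.1.2 x.2.

Lemma insP_inj n : injective (@insP n).
Proof.
move=> [[[s1 e1] i1] b1] [[[s2 e2] i2] b2]; rewrite /insP /ins /= => [[Es Ee]].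
have Ei : i1 = i2.
  have : (tperm i1 ord_max * Lp s1)%g i1 = (tperm i2 ord_max * Lp s2)%g i2.
    by rewrite !permM !tpermL /Lp !lift_perm_id.
  by rewrite -Es => /perm_inj.
subst i2.
have EL : Lp s1 = Lp s2 by apply: (mulgI (tperm i1 ord_max)).
have Es' : s1 = s2.
  apply/permP => j.
  have := congr1 (fun p : {perm _} => p (lift ord_max j)) EL.
  by rewrite /= /Lp !lift_perm_lift => /lift_inj.
have Eb : b1 = b2.
  by have := congr1 (fun f : {ffun _ -> bool} => f i1) Ee; rewrite !ffunE eqxx.
have Ee' : e1 = e2.
  apply/ffunP => j; case: (eqVneq (lift ord_max j) i1) => h.
    have hm : (ord_max == i1) = false by apply/negbTE; rewrite -h eq_sym lift_neq_max.
    have := congr1 (fun f : {ffun _ -> bool} => f ord_max) Ee.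
    by rewrite !ffunE hm -h !extb_lift eqxx.
  have := congr1 (fun f : {ffun _ -> bool} => f (lift ord_max j)) Ee.
  by rewrite !ffunE (negbTE h) (negbTE (lift_neq_max j)) !extb_lift.
by rewrite Es' Ee' Eb.
Qed.

Lemma card_insP n : #|{: (Bn n * 'I_n.+1 * bool)%type}| = #|{: Bn n.+1}|.
Proof.
rewrite /Bn !card_prod !card_Sn !card_ffun card_bool !card_ord factS expnS.
ring.
Qed.

Lemma insP_bij n : bijective (@insP n).
Proof. by apply: inj_card_bij; [exact: insP_inj | rewrite card_insP]. Qed.
End Stat.

Section Main.
Variables (R : comNzRingType) (k : R).
Local Notation D := (Dder k).
Local Notation MP := {mpoly R[4]}.

Definition cc n (w : Bn n) : MP := (k ^+ (n - cyc w))%:MP.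
Definition FF n : MP := \sum_(w : Bn n) (mono R w * cc w).

Lemma D_tt n (w : Bn n) j : D (tt R w j) = gg k.
Proof. by rewrite /tt /Tw; repeat case: ifP => _; rewrite ?Dvx ?Dvy ?Dvu. Qed.

Lemma D_mono n (w : Bn n) :
  D (mono R w) = \sum_j gg k * \prod_(l | l != j) tt R w l.
Proof. by rewrite mono_prod Dprod // => j; exact: D_tt. Qed.

Lemma FF_rec n : FF n.+1 = (vy R + vu R) * FF n + D (FF n).
Proof.
rewrite /FF Dsum mulr_sumr -big_split /=.
rewrite (reindex (@insP n)) /=; last exact: onW_bij (insP_bij n).
rewrite -(pair_bigA _ (fun p b => mono R (ins p.1 p.2 b) * cc (ins p.1 p.2 b))) /=.
rewrite -(pair_bigA _ (fun w i => \sum_b mono R (ins w i b) * cc (ins w i b))) /=.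
apply: eq_bigr => w _.
rewrite big_ord_recr /= addrC DM DC mulr0 addr0 D_mono mulr_suml.
congr (_ + _).
  rewrite !big_bool /= !mono_prod !prod_ins_max /cc !cyc_ins_max !subSS.
  by rewrite mulrDl !mulrA.
rewrite (reindex_inj (@perm_inj _ w.1)) /=.
apply: eq_bigr => j _.
rewrite widen_lift big_bool /= !mono_prod !prod_ins /cc !cyc_ins permK.
rewrite subSn ?cyc_le // exprS mpolyCM /gg.
move: (k%:MP : MP) (\prod_(j0 | j0 != j) tt R w j0) ((k ^+ (n - cyc w))%:MP : MP) => a P c.
rewrite /=; ring.
Qed.

Lemma FF0 : FF 0 = 1.
Proof.
rewrite /FF (eq_bigr (fun _ => 1)); last first.
  move=> w _; rewrite mono_prod big_ord0 /cc.
  have -> : cyc w = 0%N by apply/eqP; rewrite -leqn0 cyc_le.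
  by rewrite expr0 mpolyC1 mulr1.
by rewrite sumr_const /Bn card_prod card_Sn card_ffun card_ord.
Qed.

Lemma iterD n : iter n D (vI R) = vI R * FF n.
Proof.
elim: n => [|n IH]; first by rewrite FF0 mulr1.
by rewrite iterS IH DM DvI FF_rec; ring.
Qed.
End Main.

Theorem lemma11 (R : comNzRingType) (k : R) (n : nat) : (1 <= n)%N ->
  iter n (Dder k) (vI R) =
  vI R * \sum_(w : Bn n)
     (vx R ^+ exc w * vy R ^+ aexc w * vu R ^+ fixB w * (k ^+ (n - cyc w))%:MP).
Proof. by move=> _; exact: iterD. Qed.
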